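(* Let $F=\{f_i\}_{i=1}^N$ be a tight frame for an $n$-dimensional Hilbert space $\mathcal{H}_n$ and let $p>1$. If $S_F^{-1}F\in\zeta_{\mathfrak{R}}^{(1),p}(F)$, then $S_F^{-1}F\in\zeta_{\mathcal{N}}^{(1),p}(F)$.
   Context: $F$ is tight if $\sum_i|\langle f,f_i\rangle|^2=A\|f\|^2$ for all $f$ and some $A>0$; $S_F$ is the frame operator and $S_F^{-1}F=\{S_F^{-1}f_i\}$ the canonical dual. $G=\{g_i\}$ is a dual of $F$ if $f=\sum_i\langle f,f_i\rangle g_i$ for all $f$. For a dual $G$ let $E_if=\langle f,f_i\rangle g_i$. Define $\mathrm{AE}_{\mathfrak{R}}^{(1),p}(F,G)=\{\frac1N\sum_i\rho(E_i)^p\}^{1/p}=\{\frac1N\sum_i|\langle f_i,g_i\rangle|^p\}^{1/p}$ ($\rho$ = spectral radius) and $\mathrm{AE}_{\mathcal{N}}^{(1),p}(F,G)=\{\frac1N\sum_i\omega(E_i)^p\}^{1/p}$ where $\omega(T)=\sup_{\|f\|=1}|\langle Tf,f\rangle|$ is the numerical radius (so $\omega(E_i)=\frac{|\langle f_i,g_i\rangle|+\|f_i\|\|g_i\|}2$). $\zeta_{\mathfrak{R}}^{(1),p}(F)$ (resp. $\zeta_{\mathcal{N}}^{(1),p}(F)$) is the set of duals minimizing $\mathrm{AE}_{\mathfrak{R}}^{(1),p}(F,\cdot)$ (resp. $\mathrm{AE}_{\mathcal{N}}^{(1),p}(F,\cdot)$) over all duals of $F$. *)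

(* Defs.v *)
From HB Require Import structures.
From mathcomp Require Import all_boot all_order all_algebra.
From mathcomp Require Import boolp classical_sets reals exp.
From mathcomp Require Import complex.
Set Implicit Arguments. Unset Strict Implicit. Unset Printing Implicit Defensive.
Import Order.TTheory GRing.Theory Num.Theory.
Local Open Scope ring_scope.
Local Open Scope complex_scope.

Section Frames.
Variable R : realType.
Local Notation C := R[i].

Definition cmod (z : C) : R := ComplexField.Normc.normc z.

Definition dotC n (u v : 'cV[C]_n) : C := \sum_(k < n) u k 0 * (v k 0)^*.

Definition vnorm n (u : 'cV[C]_n) : R := Num.sqrt (\sum_(k < n) cmod (u k 0) ^+ 2).

Definition tight_frame n N (F : 'I_N -> 'cV[C]_n) : Prop :=
  exists A : R, 0 < A /\
    forall f : 'cV[C]_n, \sum_(i < N) cmod (dotC f (F i)) ^+ 2 = A * vnorm f ^+ 2.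

(* frame operator S_F as a matrix: S_F f = sum_i <f,f_i> f_i *)
Definition frame_op n N (F : 'I_N -> 'cV[C]_n) : 'M[C]_n :=
  \sum_(i < N) F i *m (map_mx conjc (F i))^T.

Definition canonical_dual n N (F : 'I_N -> 'cV[C]_n) : 'I_N -> 'cV[C]_n :=
  fun i => invmx (frame_op F) *m F i.

Definition is_dual n N (F G : 'I_N -> 'cV[C]_n) : Prop :=
  forall f : 'cV[C]_n, f = \sum_(i < N) dotC f (F i) *: G i.

Definition Eop n N (F G : 'I_N -> 'cV[C]_n) (i : 'I_N) : 'cV[C]_n -> 'cV[C]_n :=
  fun f => dotC f (F i) *: G i.

Definition num_radius n (T : 'cV[C]_n -> 'cV[C]_n) : R :=
  sup [set cmod (dotC (T f) f) | f in [set f : 'cV[C]_n | vnorm f = 1]].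

(* AE_R^{(1),p}(F,G) = {1/N sum_i rho(E_i)^p}^{1/p} = {1/N sum_i |<f_i,g_i>|^p}^{1/p} *)
Definition AE_R n N (p : R) (F G : 'I_N -> 'cV[C]_n) : R :=
  powR ((N%:R)^-1 * \sum_(i < N) powR (cmod (dotC (F i) (G i))) p) p^-1.

Definition AE_N n N (p : R) (F G : 'I_N -> 'cV[C]_n) : R :=
  powR ((N%:R)^-1 * \sum_(i < N) powR (num_radius (Eop F G i)) p) p^-1.

Definition in_zeta_R n N (p : R) (F G : 'I_N -> 'cV[C]_n) : Prop :=
  is_dual F G /\ forall G', is_dual F G' -> AE_R p F G <= AE_R p F G'.

Definition in_zeta_N n N (p : R) (F G : 'I_N -> 'cV[C]_n) : Prop :=
  is_dual F G /\ forall G', is_dual F G' -> AE_N p F G <= AE_N p F G'.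

End Frames.

(* Main.v *)
Require Import Defs.
From mathcomp Require Import all_boot all_order all_algebra.
From mathcomp Require Import boolp classical_sets reals exp.
From mathcomp Require Import complex.
From mathcomp Require Import ring lra.
Import Order.TTheory GRing.Theory Num.Theory.

Section Helpers.
Set Implicit Arguments. Unset Strict Implicit. Unset Printing Implicit Defensive.
Local Open Scope ring_scope.
Local Open Scope complex_scope.
Local Open Scope classical_set_scope.


Lemma cmodE (R : realType) (z : R[i]) : (cmod z)%:C = `|z|.
Proof. by case: z. Qed.

Lemma cmod_ge0 (R : realType) (z : R[i]) : 0 <= cmod z.
Proof. rewrite -lecR cmodE; exact: normr_ge0. Qed.

Lemma cmodM (R : realType) (z w : R[i]) : cmod (z * w) = cmod z * cmod w.
Proof. by apply: complexI; rewrite rmorphM /= !cmodE normrM. Qed.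

Lemma cmodJ (R : realType) (z : R[i]) : cmod (z^*) = cmod z.
Proof. by apply: complexI; rewrite !cmodE normcJ. Qed.

Lemma cmodR (R : realType) (x : R) : 0 <= x -> cmod (x%:C) = x.
Proof. by move=> x0; apply: complexI; rewrite cmodE ger0_norm // ler0c. Qed.

Lemma cmod0 (R : realType) : cmod (0 : R[i]) = 0.
Proof. by rewrite -[0 : R[i]]/((0:R)%:C) cmodR. Qed.

Lemma dotCDl (R : realType) n (u w v : 'cV[R[i]]_n) : dotC (u + w) v = dotC u v + dotC w v.
Proof. by rewrite /dotC -big_split; apply: eq_bigr => k _; rewrite mxE mulrDl. Qed.

Lemma dotCDr (R : realType) n (u w v : 'cV[R[i]]_n) : dotC v (u + w) = dotC v u + dotC v w.
Proof. by rewrite /dotC -big_split; apply: eq_bigr => k _; rewrite mxE rmorphD mulrDr. Qed.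

Lemma dotCZl (R : realType) n a (u v : 'cV[R[i]]_n) : dotC (a *: u) v = a * dotC u v.
Proof. by rewrite /dotC mulr_sumr; apply: eq_bigr => k _; rewrite mxE mulrA. Qed.

Lemma dotCZr (R : realType) n a (u v : 'cV[R[i]]_n) : dotC u (a *: v) = a^* * dotC u v.
Proof. by rewrite /dotC mulr_sumr; apply: eq_bigr => k _; rewrite mxE rmorphM /= mulrCA. Qed.

Lemma dotCJ (R : realType) n (u v : 'cV[R[i]]_n) : (dotC u v)^* = dotC v u.
Proof. by rewrite /dotC rmorph_sum; apply: eq_bigr => k _; rewrite rmorphM /= conjcK mulrC. Qed.

Lemma dotC0r (R : realType) n (u : 'cV[R[i]]_n) : dotC u 0 = 0.
Proof. by rewrite /dotC big1 // => k _; rewrite mxE rmorph0 mulr0. Qed.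

Lemma dotC_suml (R : realType) n N (c : 'I_N -> R[i]) (G : 'I_N -> 'cV[R[i]]_n) v :
  dotC (\sum_(i < N) c i *: G i) v = \sum_(i < N) c i * dotC (G i) v.
Proof.
elim/big_rec2: _; first by rewrite /dotC big1 // => k _; rewrite mxE mul0r.
by move=> i y u _ <-; rewrite dotCDl dotCZl.
Qed.

Lemma vnorm_sqr (R : realType) n (u : 'cV[R[i]]_n) : vnorm u ^+ 2 = \sum_(k < n) cmod (u k 0) ^+ 2.
Proof. by rewrite /vnorm sqr_sqrtr // sumr_ge0 // => k _; rewrite sqr_ge0. Qed.

Lemma vnorm_ge0 (R : realType) n (u : 'cV[R[i]]_n) : 0 <= vnorm u.
Proof. exact: sqrtr_ge0. Qed.

Lemma dotCC (R : realType) n (u : 'cV[R[i]]_n) : dotC u u = (vnorm u ^+ 2)%:C.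
Proof.
rewrite vnorm_sqr rmorph_sum /dotC; apply: eq_bigr => k _.
by rewrite rmorphXn /= cmodE sqr_normc.
Qed.

Lemma dotC_eq0 (R : realType) n (u : 'cV[R[i]]_n) : dotC u u = 0 -> u = 0.
Proof.
rewrite /dotC => /eqP; rewrite psumr_eq0; last by move=> k _; rewrite mulcJ_ge0.
move=> /allP H; apply/matrixP => k j; rewrite (ord1 j) mxE.
have /H : k \in index_enum 'I_n by rewrite mem_index_enum.
by rewrite /= -sqr_normc sqrf_eq0 normr_eq0 => /eqP.
Qed.


Lemma cs_real (R : realType) n (a b : 'I_n -> R) :
  (\sum_(k < n) a k * b k) ^+ 2 <= (\sum_(k < n) a k ^+ 2) * (\sum_(k < n) b k ^+ 2).
Proof.
have eL : (\sum_(k < n) a k * b k) ^+ 2 =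
   \sum_(j < n) \sum_(k < n) (a j * b j) * (a k * b k).
  by rewrite expr2 mulr_suml; apply: eq_bigr => j _; rewrite mulr_sumr.
have eR : (\sum_(k < n) a k ^+ 2) * (\sum_(k < n) b k ^+ 2) =
   \sum_(j < n) \sum_(k < n) a j ^+ 2 * b k ^+ 2.
  by rewrite mulr_suml; apply: eq_bigr => j _; rewrite mulr_sumr.
have eR' : (\sum_(k < n) a k ^+ 2) * (\sum_(k < n) b k ^+ 2) =
   \sum_(j < n) \sum_(k < n) a k ^+ 2 * b j ^+ 2.
  by rewrite eR exchange_big.
rewrite eL eR.
suff : \sum_(j < n) \sum_(k < n) (a j * b j) * (a k * b k) +
       \sum_(j < n) \sum_(k < n) (a j * b j) * (a k * b k) <=
       \sum_(j < n) \sum_(k < n) a j ^+ 2 * b k ^+ 2 +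
       \sum_(j < n) \sum_(k < n) a k ^+ 2 * b j ^+ 2.
  by rewrite -eR' eR; lra.
rewrite -!big_split /=; apply: ler_sum => j _.
rewrite -!big_split /=; apply: ler_sum => k _.
have := sqr_ge0 (a j * b k - a k * b j).
by move=> h; rewrite -subr_ge0; apply: le_trans h _; rewrite le_eqVlt; apply/orP; left; apply/eqP; ring.
Qed.

Lemma cs (R : realType) n (u v : 'cV[R[i]]_n) : cmod (dotC u v) <= vnorm u * vnorm v.
Proof.
apply: (@le_trans _ _ (\sum_(k < n) cmod (u k 0) * cmod (v k 0))).
  rewrite -lecR cmodE rmorph_sum /=.
  apply: le_trans (ler_norm_sum _ _ _) _.
  rewrite le_eqVlt; apply/orP; left; apply/eqP; apply: eq_bigr => k _.
  by rewrite rmorphM /= !cmodE normrM normcJ.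
rewrite /vnorm -sqrtrM; last by rewrite sumr_ge0 // => k _; rewrite sqr_ge0.
have h0 : 0 <= \sum_(k < n) cmod (u k 0) * cmod (v k 0).
  by rewrite sumr_ge0 // => k _; rewrite mulr_ge0 // cmod_ge0.
rewrite -(ger0_norm h0) -sqrtr_sqr; apply: ler_wsqrtr; exact: cs_real.
Qed.

Lemma vnormZ (R : realType) n (a : R) (u : 'cV[R[i]]_n) : 0 <= a ->
  vnorm (a%:C *: u) = a * vnorm u.
Proof.
move=> a0; rewrite /vnorm.
rewrite -[X in _ = X * _](ger0_norm a0) -sqrtr_sqr -sqrtrM ?sqr_ge0 //.
congr Num.sqrt; rewrite mulr_sumr; apply: eq_bigr => k _.
by rewrite mxE cmodM cmodR // exprMn.
Qed.


Lemma dotCNl (R : realType) n (w v : 'cV[R[i]]_n) : dotC (- w) v = - dotC w v.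
Proof. by rewrite -scaleN1r dotCZl mulN1r. Qed.

Lemma frame_apply (R : realType) n N (F : 'I_N -> 'cV[R[i]]_n) f :
  frame_op F *m f = \sum_(i < N) dotC f (F i) *: F i.
Proof.
rewrite /frame_op mulmx_suml; apply: eq_bigr => i _; rewrite -mulmxA.
rewrite [X in _ *m X]mx11_scalar mul_mx_scalar; congr (_ *: _).
by rewrite !mxE /dotC; apply: eq_bigr => k _; rewrite !mxE mulrC.
Qed.

Lemma conj_i (R : realType) : ('i : R[i])^* = - 'i.
Proof. by apply/eqP; rewrite eq_complex /= oppr0 !eqxx. Qed.

Lemma i_neq0 (R : realType) : ('i : R[i]) != 0.
Proof. by apply/eqP => -[] /eqP; rewrite oner_eq0. Qed.

Lemma polar (R : realType) n (M : 'M[R[i]]_n) : (forall f, dotC (M *m f) f = 0) -> M = 0.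
Proof.
move=> H.
have B0 : forall x y, dotC (M *m x) y = 0.
  move=> x y.
  have h1 := H (x + y); rewrite mulmxDr dotCDl !dotCDr !H add0r addr0 in h1.
  have h2 := H (x + 'i *: y).
  rewrite mulmxDr -scalemxAr dotCDl !dotCDr !dotCZl !dotCZr !H !mulr0 add0r addr0 in h2.
  have key : forall c a b : R[i], c = - 'i -> a + b = 0 -> c * a + 'i * b = 0 -> a = 0.
    move=> c a b -> e1 e2.
    have e : (2%:R * 'i) * a = 0.
      have -> : (2%:R * 'i) * a = 'i * (a + b) - (- 'i * a + 'i * b) by ring.
      by rewrite e1 e2 mulr0 subr0.
    move/eqP: e; rewrite !mulf_eq0 pnatr_eq0 /= (negbTE (i_neq0 R)) /=.
    by move/eqP.
  exact: (key _ _ _ (conj_i R) h1 h2).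
apply/matrixP => i j; rewrite [RHS]mxE.
have := dotC_eq0 (B0 (delta_mx j 0) (M *m delta_mx j 0)).
by rewrite -colE => /matrixP/(_ i 0); rewrite !mxE.
Qed.

Lemma mulJ_norm (R : realType) (z : R[i]) : z * z^* = (cmod z ^+ 2)%:C.
Proof. rewrite rmorphXn /= cmodE; symmetry; exact: sqr_normc. Qed.

Lemma tight_S (R : realType) n N (F : 'I_N -> 'cV[R[i]]_n) (A : R) :
  (forall f : 'cV[R[i]]_n, \sum_(i < N) cmod (dotC f (F i)) ^+ 2 = A * vnorm f ^+ 2) ->
  frame_op F = (A%:C)%:M.
Proof.
move=> H; apply/eqP; rewrite -subr_eq0; apply/eqP; apply: polar => f.
rewrite mulmxBl mul_scalar_mx frame_apply dotCDl dotCNl dotC_suml dotCZl dotCC.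
have -> : \sum_(i < N) dotC f (F i) * dotC (F i) f = (A * vnorm f ^+ 2)%:C.
  rewrite -H rmorph_sum; apply: eq_bigr => i _.
  by rewrite -(dotCJ f (F i)) mulJ_norm.
by rewrite rmorphM subrr.
Qed.



Lemma elem_ub (R : realType) n N (F G : 'I_N -> 'cV[R[i]]_n) i f :
  vnorm f = 1 -> cmod (dotC (Eop F G i f) f) <= vnorm (F i) * vnorm (G i).
Proof.
move=> f1; rewrite /Eop dotCZl cmodM.
apply: ler_pM; rewrite ?cmod_ge0 //.
  by apply: le_trans (cs _ _) _; rewrite f1 mul1r.
by apply: le_trans (cs _ _) _; rewrite f1 mulr1.
Qed.

Lemma nr_hasub (R : realType) n N (F G : 'I_N -> 'cV[R[i]]_n) i :
  has_ubound [set cmod (dotC (Eop F G i f) f) | f in [set f : 'cV[R[i]]_n | vnorm f = 1]].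
Proof. by exists (vnorm (F i) * vnorm (G i)) => y [f hf <-]; apply: elem_ub. Qed.

Lemma nr_ub (R : realType) n N (F G : 'I_N -> 'cV[R[i]]_n) i :
  num_radius (Eop F G i) <= vnorm (F i) * vnorm (G i).
Proof.
rewrite /num_radius.
have [ne|e] := pselect ([set cmod (dotC (Eop F G i f) f) | f in [set f : 'cV[R[i]]_n | vnorm f = 1]] !=set0).
  by apply: ge_sup => // y [f hf <-]; apply: elem_ub.
rewrite sup_out; first by rewrite mulr_ge0 // vnorm_ge0.
by case.
Qed.

Lemma nr_ge0 (R : realType) n N (F G : 'I_N -> 'cV[R[i]]_n) i :
  0 <= num_radius (Eop F G i).
Proof.
rewrite /num_radius.
have [[y hy]|e] := pselect ([set cmod (dotC (Eop F G i f) f) | f in [set f : 'cV[R[i]]_n | vnorm f = 1]] !=set0).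
  apply: le_trans (ub_le_sup (nr_hasub F G i) hy).
  by case: hy => f _ <-; exact: cmod_ge0.
by rewrite sup_out //; case.
Qed.

Lemma nr_lb (R : realType) n N (F G : 'I_N -> 'cV[R[i]]_n) i :
  cmod (dotC (F i) (G i)) <= num_radius (Eop F G i).
Proof.
have [G0|Gn0] := eqVneq (G i) 0.
  by rewrite G0 dotC0r cmod0 nr_ge0.
set v := vnorm (G i).
have v0 : v != 0.
  apply: contra Gn0 => /eqP v0; apply/eqP; apply: dotC_eq0.
  by rewrite dotCC -/v v0 expr0n.
have vp : 0 < v by rewrite lt_def v0 vnorm_ge0.
set f := (v^-1)%:C *: G i.
have f1 : vnorm f = 1 by rewrite /f vnormZ ?invr_ge0 ?vnorm_ge0 // mulVf.
have -> : cmod (dotC (F i) (G i)) = cmod (dotC (Eop F G i f) f).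
  rewrite /Eop /f dotCZl cmodM !dotCZl !dotCZr !cmodM cmodJ dotCC.
  have vi : 0 <= v^-1 by rewrite invr_ge0 ltW.
  rewrite (cmodR vi) (cmodR (sqr_ge0 _)).
  rewrite -(dotCJ (F i) (G i)) cmodJ -/v.
  by field.
apply: ub_le_sup; first exact: nr_hasub.
by exists f.
Qed.

Lemma AE_mono (R : realType) N (p : R) (a b : 'I_N -> R) : 0 < p ->
  (forall i, 0 <= a i) -> (forall i, a i <= b i) ->
  powR ((N%:R)^-1 * \sum_(i < N) powR (a i) p) p^-1 <=
  powR ((N%:R)^-1 * \sum_(i < N) powR (b i) p) p^-1.
Proof.
move=> p0 a0 ab.
have pi : 0 <= p^-1 by rewrite invr_ge0 ltW.
apply: (ge0_ler_powR pi); rewrite ?nnegrE.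
- by rewrite mulr_ge0 ?invr_ge0 // sumr_ge0 // => k _; rewrite powR_ge0.
- by rewrite mulr_ge0 ?invr_ge0 // sumr_ge0 // => k _; rewrite powR_ge0.
apply: ler_wpM2l; first by rewrite invr_ge0.
apply: ler_sum => k _; apply: (ge0_ler_powR (ltW p0)); rewrite ?nnegrE //.
exact: le_trans (a0 k) (ab k).
Qed.

End Helpers.

Local Open Scope ring_scope.
Local Open Scope complex_scope.

Theorem proposition5p6 (R : realType) (n N : nat) (F : 'I_N -> 'cV[R[i]]_n)
  (p : R) :
  tight_frame F -> 1 < p ->
  in_zeta_R p F (canonical_dual F) ->
  in_zeta_N p F (canonical_dual F).
Proof.
move=> [A [A0 HA]] p1 [dualc minR]; split; first exact: dualc.
move=> G' dG'.
have p0 : 0 < p by apply: lt_trans p1.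
have Ai : 0 <= A^-1 by rewrite invr_ge0 ltW.
have S := tight_S HA.
have can : forall i, canonical_dual F i = (A^-1)%:C *: F i.
  by move=> i; rewrite /canonical_dual S invmx_scalar mul_scalar_mx fmorphV.
apply: le_trans (_ : _ <= AE_R p F (canonical_dual F)) _.
  apply: AE_mono => // i; first exact: nr_ge0.
  apply: le_trans (nr_ub _ _ _) _.
  rewrite can (vnormZ _ Ai) dotCZr cmodM cmodJ (cmodR Ai) dotCC (cmodR (sqr_ge0 _)).
  by rewrite mulrCA expr2.
apply: le_trans (minR _ dG') _.
apply: AE_mono => // i; first exact: cmod_ge0.
exact: nr_lb.
Qed.
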